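(* Let $\mathbf{M}$ be a POMDP and $\beta\in[0,1)$. For $k\in\mathbb{N}$ let \[ E_{k,\max}:=\sup_{\mathbf{C}\in\overline{\mathcal{F}}_{k}(\mathbf{M})}\ \sum_{t=2}^{\infty}\beta^{t-2}H^{\mathbf{C}}(S_{t} \mid S^{t-1}). \] Then for all $j\leq k$, $E_{j,\max}\leq E_{k,\max}$.
   Context: A POMDP is $\mathbf{M}=(\mathcal{S},s_I,\mathcal{A},P,\mathcal{Z},O,R)$ with finite state set $\mathcal{S}$, initial state $s_I$, finite action set $\mathcal{A}$, transition probabilities $P(s'|s,a)$, finite observation set $\mathcal{Z}$, observation probabilities $O(z|s)$ and reward $R$. A $k$-FSC is $\mathbf{C}=(\mathcal{Q},q_1,\gamma,\delta)$ with memory states $\mathcal{Q}=\{q_1,\ldots,q_k\}$, initial memory $q_1$, decision function $\gamma:\mathcal{Q}\times\mathcal{Z}\to\Delta(\mathcal{A})$ and memory transition function $\delta:\mathcal{Q}\times\mathcal{Z}\times\mathcal{A}\to\Delta(\mathcal{Q})$. Under $\mathbf{C}$: $S_1=s_I$, $Q_1=q_1$, $Z_t\sim O(\cdot|S_t)$, $A_t\sim\gamma(\cdot|Q_t,Z_t)$, $S_{t+1}\sim P(\cdot|S_t,A_t)$, $Q_{t+1}\sim\delta(\cdot|Q_t,Z_t,A_t)$; $H^{\mathbf{C}}(S_t\mid S^{t-1})$ is the conditional entropy of $S_t$ given $(S_1,\ldots,S_{t-1})$ in this process. $\overline{\mathcal{F}}_k(\mathbf{M})$ is the set of $k$-FSCs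 (with arbitrary $\gamma$) whose memory transition function is $\overline{\delta}$ given by: for all $z\in\mathcal{Z}$, $a\in\mathcal{A}$, $\overline{\delta}(q_{i+1}|q_i,z,a)=1$ for $1\le i<k$, $\overline{\delta}(q_k|q_k,z,a)=1$, and $\overline{\delta}(q_i|q_j,z,a)=0$ otherwise. *)

(* Defs.v *)
From HB Require Import structures.
From mathcomp Require Import all_boot all_order all_algebra.
From mathcomp Require Import all_classical all_reals all_analysis.
Set Implicit Arguments. Unset Strict Implicit. Unset Printing Implicit Defensive.
Import Order.TTheory GRing.Theory Num.Theory.
Local Open Scope ring_scope.

Section POMDP.
Variables (R : realType) (S A Z : finType).

(* A POMDP: initial state sI, transition P s a s' = P(s'|s,a),
   observation O s z = O(z|s), reward Rw (irrelevant here). *)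
Definition pomdp_wf (P : S -> A -> S -> R) (O : S -> Z -> R) : Prop :=
  (forall s a s', 0 <= P s a s') /\ (forall s a, \sum_(s' : S) P s a s' = 1) /\
  (forall s z, 0 <= O s z) /\ (forall s, \sum_(z : Z) O s z = 1).

(* A k-FSC with memory states 'I_k (q_1 is the ordinal 0, q_i is i-1):
   decision function gam q z a = gamma(a|q,z),
   memory transition del q z a q' = delta(q'|q,z,a). *)
Record fsc (k : nat) := FSC {
  gam : 'I_k -> Z -> A -> R;
  del : 'I_k -> Z -> A -> 'I_k -> R }.

Definition fsc_wf k (C : fsc k) : Prop :=
  (forall q z a, 0 <= gam C q z a) /\ (forall q z, \sum_(a : A) gam C q z a = 1) /\
  (forall q z a q', 0 <= del C q z a q') /\
  (forall q z a, \sum_(q' : 'I_k) del C q z a q' = 1).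

Definition delta_bar (k : nat) : 'I_k -> Z -> A -> 'I_k -> R :=
  fun q _ _ q' => ((val q' == minn (val q).+1 k.-1)%N)%:R.

Definition Fbar (k : nat) : set (fsc k) :=
  [set C | fsc_wf C /\ del C = @delta_bar k].

Variables (sI : S) (P : S -> A -> S -> R) (O : S -> Z -> R).

(* joint_pr C l q = Pr(S_t = l_0, ..., S_1 = l_{t-1}, Q_t = q) where
   l is the state path listed most-recent-first and t = size l. *)
Fixpoint joint_pr k (C : fsc k) (l : seq S) (q' : 'I_k) : R :=
  match l with
  | [::] => 0
  | s' :: l' =>
    match l' with
    | [::] => ((s' == sI) && (val q' == 0%N))%:R
    | s :: _ =>
      \sum_(q : 'I_k) joint_pr C l' q *
        \sum_(z : Z) O s z * \sum_(a : A) gam C q z a * P s a s' * del C q z a q'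
    end
  end.

Definition path_pr k (C : fsc k) (l : seq S) : R := \sum_(q : 'I_k) joint_pr C l q.

Definition centr_term (p r : R) : R := if p == 0 then 0 else - (p * ln (p / r)).

Definition cond_entropy k (C : fsc k) (t : nat) : R :=
  \sum_(x : (t.-1).-tuple S) \sum_(s : S)
     centr_term (path_pr C (s :: tval x)) (path_pr C (tval x)).

Definition disc_entropy (beta : R) k (C : fsc k) : \bar R :=
  (\sum_(2 <= t <oo) (beta ^+ (t - 2) * cond_entropy C t)%:E)%E.

Definition E_max (beta : R) (k : nat) : \bar R :=
  ereal_sup [set disc_entropy beta C | C in @Fbar k].

End POMDP.

(* Main.v *)
Require Import Defs.
From HB Require Import structures.
From mathcomp Require Import all_boot all_order all_algebra.
From mathcomp Require Import all_classical all_reals all_analysis.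
Import Order.TTheory GRing.Theory Num.Theory.
From mathcomp Require Import zify.
Local Open Scope ring_scope.

Section Aux.
Variables (R : realType) (S A Z : finType) (sI : S)
  (P : S -> A -> S -> R) (O : S -> Z -> R).
Variables (j0 k : nat) (hjk : (j0.+1 <= k)%N).

Definition projq (q : 'I_k) : 'I_j0.+1 := inord (minn q j0).

Lemma projqE q : val (projq q) = minn q j0.
Proof. by rewrite /projq /= inordK // ltnS geq_minr. Qed.

Definition liftC (C : fsc R A Z j0.+1) : fsc R A Z k :=
  FSC (fun q z a => gam C (projq q) z a) (@delta_bar R A Z k).

Lemma sum_indic (n m : nat) (hm : (m < n)%N) (F : 'I_n -> bool) :
  \sum_(q : 'I_n | F q) ((val q == m)%N%:R : R) = (F (Ordinal hm))%:R.
Proof.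
rewrite big_mkcond (bigD1 (Ordinal hm)) //= eqxx big1 ?addr0.
  by case: (F _).
move=> i /eqP hi; case: (F i) => //; case: eqP => // e; exfalso; apply: hi.
by apply: val_inj.
Qed.

Lemma km : (minn k.-1 k.-1 < k)%N.
Proof. by rewrite minnn; case: k hjk. Qed.

Lemma db_proj (C : fsc R A Z j0.+1) (q' : 'I_k) z a (q0 : 'I_j0.+1) :
  \sum_(q'0 | projq q'0 == q0) @delta_bar R A Z k q' z a q'0 =
  @delta_bar R A Z j0.+1 (projq q') z a q0.
Proof.
have hm : (minn (val q').+1 k.-1 < k)%N.
  by apply: leq_ltn_trans (geq_minr _ _) _; case: k hjk.
rewrite /delta_bar (sum_indic _ _ hm) projqE; congr (_%:R); congr (nat_of_bool _).
apply/idP/idP; [move=> /eqP <- | move=> /eqP e]; apply/eqP.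
  by rewrite (projqE (Ordinal hm)) /=; lia.
by apply: val_inj; rewrite (projqE (Ordinal hm)) /= e; lia.
Qed.

Lemma joint_lift (C : fsc R A Z j0.+1) (hd : del C = @delta_bar R A Z j0.+1) (l : seq S) (q : 'I_j0.+1) :
  joint_pr sI P O C l q = \sum_(q' | projq q' == q) joint_pr sI P O (liftC C) l q'.
Proof.
elim: l q => [|s' l IH] q /=; first by rewrite big1.
case: l IH => [|s l] IH.
  have h0 : (0 < k)%N by case: k hjk.
  case: (s' == sI) => /=; last by rewrite big1.
  rewrite (sum_indic _ _ h0) /=; congr (_%:R); congr (nat_of_bool _).
  apply/idP/idP; [move=> /eqP e | move=> /eqP <-]; apply/eqP.
    by apply: val_inj; rewrite (projqE (Ordinal h0)) /= e; lia.
  by rewrite (projqE (Ordinal h0)) /=; lia.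
pose G q' q1 := joint_pr sI P O (liftC C) (s :: l) q' *
   (\sum_(z : Z) O s z * \sum_(a : A) gam C q1 z a * P s a s' * @delta_bar R A Z j0.+1 q1 z a q).
rewrite (eq_bigr (fun q1 => \sum_(q' | projq q' == q1) G q' (projq q'))); last first.
  move=> i _; rewrite IH big_distrl hd; apply: eq_bigr => q' /eqP ->; done.
rewrite [LHS](esym (@partition_big _ _ _ _ _ _ xpredT projq xpredT (fun q' => G q' (projq q')) (fun _ _ => erefl))) /G /=.
rewrite exchange_big /=; apply: eq_bigr => q' _.
rewrite -big_distrr /=; congr (_ * _).
rewrite exchange_big /=; apply: eq_bigr => z _.
rewrite -big_distrr /=; congr (_ * _).
rewrite exchange_big /=; apply: eq_bigr => a _.
by rewrite -big_distrr /= (db_proj C).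
Qed.

Lemma path_lift (C : fsc R A Z j0.+1) (hd : del C = @delta_bar R A Z j0.+1) l :
  path_pr sI P O C l = path_pr sI P O (liftC C) l.
Proof.
rewrite /path_pr (eq_bigr _ (fun q _ => joint_lift _ hd l q)).
exact: (esym (@partition_big _ _ _ _ _ _ xpredT projq xpredT _ (fun _ _ => erefl))).
Qed.

End Aux.

Theorem lemma2 (R : realType) (S A Z : finType) (sI : S)
  (P : S -> A -> S -> R) (O : S -> Z -> R) (Rw : S -> A -> R)
  (hM : pomdp_wf P O) (beta : R) (hb0 : 0 <= beta) (hb1 : beta < 1)
  (j k : nat) (hj : (0 < j)%N) (hjk : (j <= k)%N) :
  (E_max sI P O beta j <= E_max sI P O beta k)%E.
Proof.
case: j hj hjk => // j0 _ hjk.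
rewrite /E_max; apply: ereal_sup_le => x /= [C [hw hd] <-].
case: hw => g0 [g1 [d0 d1]].
exists (liftC _ _ _ _ k C).
  split; last by [].
  split; first by move=> q z a /=; apply: g0.
  split; first by move=> q z /=; apply: g1.
  split; first by move=> q z a q' /=; rewrite /delta_bar; case: eqP.
  move=> q z a /=.
  have hm : (minn (val q).+1 k.-1 < k)%N.
    by apply: leq_ltn_trans (geq_minr _ _) _; case: (k) hjk.
  by rewrite /delta_bar (sum_indic _ _ _ hm (fun _ => true)).
rewrite /disc_entropy; apply: eq_eseriesr => t _; congr (_ %:E)%E; congr (_ * _).
rewrite /cond_entropy; apply: eq_bigr => xx _; apply: eq_bigr => ss _.
by rewrite -!(path_lift _ _ _ _ _ _ _ _ _ hjk _ hd).
Qed.
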